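(* Let $q$ be an odd prime power, $z\in\mathbb F_q^\times$, and $A\in\widehat{\mathbb F_q^\times}$ of order larger than $2$. Then $${}_2\mathbb F_1\!\left[\begin{matrix}A&A\phi\\&\phi\end{matrix};z\right]=\frac{1+\phi(z)}2\left(\overline A^2(1+\sqrt z)+\overline A^2(1-\sqrt z)\right),$$ $${}_2\mathbb F_1\!\left[\begin{matrix}A&A\phi\\&A^2\end{matrix};z\right]=\frac{1+\phi(1-z)}2\left(\overline A^2\!\left(\frac{1+\sqrt{1-z}}2\right)+\overline A^2\!\left(\frac{1-\sqrt{1-z}}2\right)\right).$$
   Context: $\mathbb F_q$ is a finite field with $q$ elements, $q$ a power of an odd prime $p$. $\widehat{\mathbb F_q^\times}$ is the group of multiplicative characters $\chi:\mathbb F_q^\times\to\mathbb C^\times$; every character, including the trivial character $\varepsilon$, is extended to $\mathbb F_q$ by $\chi(0)=0$. $\phi$ is the quadratic character, $\overline\chi$ denotes the complex-conjugate (inverse) character, and products/powers of characters are pointwise. Jacobi sum: $J(A,B)=\sum_{x\in\mathbb F_q}A(x)B(1-x)$. Period function: ${}_2\mathbb P_1\!\left[\begin{matrix}A&B\\&C\end{matrix};\lambda\right]=\sum_{y\in\mathbb F_q}B(y)\,\overline BC(1-y)\,\overline A(1-\lambda y)$; normalized function ${}_2\mathbb F_1\!\left[\begin{matrix}A&B\\&C\end{matrix};\lambda\right]=\frac{1}{J(B,C\overline B)}\,{}_2\mathbb P_1\!\left[\begin{matrix}A&B\\&C\end{matrix};\lambda\right]$. For $w\in\mathbb F_q$,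 $\sqrt w$ denotes either square root of $w$ in $\mathbb F_q$ when one exists (the expressions do not depend on the choice); when $w$ is a nonzero non-square the prefactor $(1+\phi(w))/2$ is $0$ and the whole right-hand side is interpreted as $0$. *)

(* Defs.v *)
From HB Require Import structures.
From mathcomp Require Import all_boot all_order all_algebra all_field.
Set Implicit Arguments. Unset Strict Implicit. Unset Printing Implicit Defensive.
Import Order.TTheory GRing.Theory Num.Theory.
Local Open Scope ring_scope.

(* Multiplicative characters of F_q^x with values in algC, extended by chi(0)=0,
   represented as functions F -> algC. *)
Definition is_mchar (F : finFieldType) (chi : F -> algC) : Prop :=
  [/\ chi 0 = 0, chi 1 = 1 & forall x y : F, chi (x * y) = chi x * chi y].

Definition eps (F : finFieldType) : F -> algC := fun x => if x == 0 then 0 else 1.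

Definition qchar (F : finFieldType) : F -> algC :=
  fun x => if x == 0 then 0 else if [exists y : F, y ^+ 2 == x] then 1 else -1.

Definition cmul (F : finFieldType) (A B : F -> algC) : F -> algC := fun x => A x * B x.
Definition cconj (F : finFieldType) (A : F -> algC) : F -> algC := fun x => (A x)^*.
Definition cexp (F : finFieldType) (A : F -> algC) (n : nat) : F -> algC :=
  fun x => A x ^+ n.

Definition jacobi (F : finFieldType) (A B : F -> algC) : algC :=
  \sum_(x : F) A x * B (1 - x).

Definition P21 (F : finFieldType) (A B C : F -> algC) (lam : F) : algC :=
  \sum_(y : F) B y * cmul (cconj B) C (1 - y) * cconj A (1 - lam * y).

Definition F21 (F : finFieldType) (A B C : F -> algC) (lam : F) : algC :=
  P21 A B C lam / jacobi B (cmul C (cconj B)).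

(* a chosen square root in F (0 if none exists; only used where the
   prefactor (1+phi(w))/2 vanishes otherwise) *)
Definition sqrtF (F : finFieldType) (w : F) : F :=
  odflt 0 [pick s : F | s ^+ 2 == w].

Arguments eps F : clear implicits.
Arguments qchar F : clear implicits.

(* Main.v *)
Require Import Defs.
From HB Require Import structures.
From mathcomp Require Import all_boot all_order all_algebra all_field.
Import GRing.Theory Num.Theory.
Local Open Scope ring_scope.
From mathcomp Require Import all_solvable.
From mathcomp Require Import ring.
From Stdlib Require Import FunctionalExtensionality.
Import GRing.Theory Num.Theory.
Local Open Scope ring_scope.

Set Implicit Arguments. Unset Strict Implicit.

Lemma two_neq0 (F : finFieldType) (hodd : odd #|F|) : (2%:R : F) != 0.
Proof.
apply/negP => /eqP h2.
have hc : 2%N \in [pchar F] by rewrite inE /= h2 eqxx.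
have := card_pprimeChar hc.
set n := logn _ _ => hcard.
have g1 := finNzRing_gt1 F.
have : #|F| = (2 ^ n)%N by exact: hcard.
move=> {}hcard; move: hodd g1; rewrite hcard.
by case: n {hcard} => [|n] //; rewrite oddX.
Qed.

Lemma unit_pow (F : finFieldType) (x : F) : x != 0 -> x ^+ #|F|.-1 = 1.
Proof.
move=> x0; have := expf_card x.
have g1 := finNzRing_gt1 F.
rewrite -(prednK (ltnW g1)) exprS => h.
by apply: (mulfI x0); rewrite h mulr1.
Qed.

Lemma exists_prim (F : finFieldType) : exists w : F, (#|F|.-1).-primitive_root w.
Proof.
have g1 := finNzRing_gt1 F.
pose rs := [seq x <- enum F | x != 0].
have : has (#|F|.-1).-primitive_root rs.
  apply: has_prim_root.
  - by rewrite -ltnS prednK // ltnW.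
  - apply/allP => x; rewrite mem_filter => /andP[x0 _].
    by rewrite unity_rootE unit_pow.
  - by rewrite filter_uniq // enum_uniq.
  - rewrite size_filter.
    rewrite -(cardC1 (0:F)) cardE /enum_mem size_filter.
    by rewrite (@eq_filter _ _ predT) // filter_predT.
by case/hasP => w _ hw; exists w.
Qed.

Lemma card_gt1 (F : finFieldType) : (1 < #|F|)%N.
Proof. exact: finNzRing_gt1. Qed.

Lemma n1_even (F : finFieldType) (hodd : odd #|F|) : ~~ odd #|F|.-1.
Proof.
have g1 := card_gt1 F; move: hodd; rewrite -{1}(prednK (ltnW g1)) /=.
by case: (odd _).
Qed.

Lemma n1_gt0 (F : finFieldType) : (0 < #|F|.-1)%N.
Proof. by rewrite -ltnS prednK ?card_gt1 // ltnW // card_gt1. Qed.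

Lemma prim_neq0 (F : finFieldType) (w : F) : (#|F|.-1).-primitive_root w -> w != 0.
Proof.
move=> hw; apply/negP => /eqP w0; have := prim_expr_order hw.
by rewrite w0 expr0n gtn_eqF ?n1_gt0 // => /eqP; rewrite eq_sym oner_eq0.
Qed.

Lemma every_pow (F : finFieldType) (w : F) : (#|F|.-1).-primitive_root w ->
  forall x : F, x != 0 -> exists k, x = w ^+ k.
Proof.
move=> hw x x0; have [i ->] := prim_rootP hw (unit_pow x0); by exists i.
Qed.

Lemma sq_powE (F : finFieldType) (hodd : odd #|F|) (w : F) :
  (#|F|.-1).-primitive_root w -> forall k,
  [exists y : F, y ^+ 2 == w ^+ k] = ~~ odd k.
Proof.
move=> hw k; apply/existsP/idP.
  case=> y /eqP hy.
  have y0 : y != 0.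
    apply/negP => /eqP y0; move: hy; rewrite y0 expr0n /= => /eqP.
    by rewrite eq_sym expf_eq0 (negbTE (prim_neq0 hw)) andbF.
  have [j hj] := every_pow hw y0.
  move: hy; rewrite hj -exprM => /eqP; rewrite (eq_prim_root_expr hw) => /eqP hm.
  have d2 : (2 %| #|F|.-1)%N by rewrite dvdn2 n1_even.
  have := congr1 (fun m => m %% 2)%N hm; rewrite /= !modn_dvdm // !modn2.
  have := congr1 (fun m => m %% 2)%N hm; rewrite /= !modn_dvdm // !modn2.
  by rewrite oddM /= andbF; case: (odd k).
move=> ke; exists (w ^+ k./2); rewrite -exprM.
by rewrite -{2}(odd_double_half k) (negbTE ke) add0n -mul2n mulnC.
Qed.

Lemma qchar_pow (F : finFieldType) (hodd : odd #|F|) (w : F) :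
  (#|F|.-1).-primitive_root w -> forall k, qchar F (w ^+ k) = (-1) ^+ k.
Proof.
move=> hw k; rewrite /qchar expf_eq0 (negbTE (prim_neq0 hw)) andbF.
rewrite sq_powE //; case: (boolP (odd k)) => ok /=.
  by rewrite -signr_odd ok.
by rewrite -signr_odd (negbTE ok).
Qed.


Lemma qchar0 (F : finFieldType) : qchar F 0 = 0.
Proof. by rewrite /qchar eqxx. Qed.

Lemma qcharM (F : finFieldType) (hodd : odd #|F|) (x y : F) :
  qchar F (x * y) = qchar F x * qchar F y.
Proof.
have [-> | x0] := eqVneq x 0; first by rewrite mul0r qchar0 mul0r.
have [-> | y0] := eqVneq y 0; first by rewrite mulr0 qchar0 mulr0.
have [w hw] := exists_prim F.
have [k ->] := every_pow hw x0; have [l ->] := every_pow hw y0.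
by rewrite -exprD !(qchar_pow hodd hw) exprD.
Qed.

Lemma qchar_sqr (F : finFieldType) (hodd : odd #|F|) (x : F) :
  x != 0 -> qchar F x ^+ 2 = 1.
Proof.
move=> x0; have [w hw] := exists_prim F.
have [k ->] := every_pow hw x0; by rewrite (qchar_pow hodd hw) sqrr_sign.
Qed.

Lemma qchar1 (F : finFieldType) : qchar F 1 = 1.
Proof.
rewrite /qchar oner_eq0; case: existsP => // [[]]; exists 1; by rewrite expr1n.
Qed.

Lemma qchar_conj (F : finFieldType) (x : F) : (qchar F x)^* = qchar F x.
Proof.
rewrite /qchar; case: (x == 0); first by rewrite conjC0.
by case: [exists _, _]; rewrite ?conjC1 // rmorphN1.
Qed.

Lemma qchar_inv (F : finFieldType) (hodd : odd #|F|) (x : F) :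
  qchar F (x^-1) = qchar F x.
Proof.
have [-> | x0] := eqVneq x 0; first by rewrite invr0.
have h : qchar F x * qchar F x^-1 = 1 by rewrite -qcharM // mulfV // qchar1.
by rewrite -[LHS]mul1r -(qchar_sqr hodd x0) expr2 -mulrA h mulr1.
Qed.

Lemma qchar_sq (F : finFieldType) (hodd : odd #|F|) (x : F) :
  x != 0 -> qchar F (x ^+ 2) = 1.
Proof. by move=> x0; rewrite expr2 qcharM // -expr2 qchar_sqr. Qed.

Lemma qchar_nonsq (F : finFieldType) (hodd : odd #|F|) : exists a : F, qchar F a = -1.
Proof.
have [w hw] := exists_prim F; exists w.
by rewrite -[w]expr1 (qchar_pow hodd hw) expr1.
Qed.

Lemma qchar_neq0 (F : finFieldType) (hodd : odd #|F|) (x : F) :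
  x != 0 -> qchar F x != 0.
Proof.
by move=> x0; apply/negP => /eqP h; have := qchar_sqr hodd x0; rewrite h expr0n /= => /eqP; rewrite eq_sym oner_eq0.
Qed.

Lemma ch0 (F : finFieldType) (A : F -> algC) (hA : is_mchar A) : A 0 = 0.
Proof. by case: hA. Qed.
Lemma ch1 (F : finFieldType) (A : F -> algC) (hA : is_mchar A) : A 1 = 1.
Proof. by case: hA. Qed.
Lemma chM (F : finFieldType) (A : F -> algC) (hA : is_mchar A) x y :
  A (x * y) = A x * A y.
Proof. by case: hA. Qed.

Lemma chX (F : finFieldType) (A : F -> algC) (hA : is_mchar A) x k :
  A (x ^+ k) = A x ^+ k.
Proof.
case: hA => _ h1 hM; elim: k => [|k IH]; first by rewrite !expr0.
by rewrite !exprS hM IH.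
Qed.

Lemma ch_inv_mul (F : finFieldType) (A : F -> algC) (hA : is_mchar A) x :
  x != 0 -> A x * A (x^-1) = 1.
Proof. by case: hA => _ h1 hM x0; rewrite -hM mulfV. Qed.

Lemma ch_neq0 (F : finFieldType) (A : F -> algC) (hA : is_mchar A) x :
  x != 0 -> A x != 0.
Proof.
move=> x0; apply/negP => /eqP h; have := ch_inv_mul hA x0.
by rewrite h mul0r => /eqP; rewrite eq_sym oner_eq0.
Qed.

Lemma ch_inv (F : finFieldType) (A : F -> algC) (hA : is_mchar A) x :
  A (x^-1) = (A x)^-1.
Proof.
have [-> | x0] := eqVneq x 0; first by rewrite invr0 (ch0 hA) invr0.
by apply: (mulfI (ch_neq0 hA x0)); rewrite ch_inv_mul // mulfV // ch_neq0.
Qed.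

Lemma ch_conj (F : finFieldType) (A : F -> algC) (hA : is_mchar A) x :
  (A x)^* = A (x^-1).
Proof.
have [-> | x0] := eqVneq x 0; first by rewrite invr0 (ch0 hA) conjC0.
have hn : A x ^+ #|F|.-1 = 1 by rewrite -chX // unit_pow // (ch1 hA).
have h1 : `|A x| = 1.
  apply/eqP; rewrite -(pexpr_eq1 (n1_gt0 F)) // -normrX hn normr1 //.
have hx : A x * (A x)^* = 1 by rewrite -normCK h1 expr1n.
apply: (mulfI (ch_neq0 hA x0)); by rewrite hx ch_inv_mul.
Qed.

Lemma four_neq0 (F : finFieldType) (hodd : odd #|F|) : (4%:R : F) != 0.
Proof.
have -> : (4%:R : F) = 2%:R * 2%:R by rewrite -natrM.
by rewrite mulf_neq0 // two_neq0.
Qed.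

Lemma char_sum0 (F : finFieldType) (chi : F -> algC)
  (hM : forall x y, chi (x * y) = chi x * chi y) (a : F) :
  a != 0 -> chi a != 1 -> \sum_x chi x = 0.
Proof.
move=> a0 ca.
have h : \sum_x chi x = chi a * \sum_x chi x.
  rewrite {1}(reindex_inj (mulfI a0)) /= mulr_sumr.
  by apply: eq_bigr => x _; rewrite hM.
have : (1 - chi a) * \sum_x chi x = 0 by rewrite mulrBl mul1r -h subrr.
by move/eqP; rewrite mulf_eq0 subr_eq0 eq_sym (negbTE ca) /= => /eqP.
Qed.

Lemma fiber_sum (F : finFieldType) (G H : F -> algC) (h : F -> F) :
  \sum_y G y * H (h y) = \sum_x H x * \sum_(y | h y == x) G y.
Proof.
rewrite (partition_big h xpredT) //=.
apply: eq_bigr => x _; rewrite mulr_sumr.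
by apply: eq_bigr => y /eqP <-; rewrite mulrC.
Qed.

Lemma sum_sqrt_nonsq (F : finFieldType) (g : F -> algC) (D : F) :
  (forall d, d ^+ 2 != D) -> \sum_(d | d ^+ 2 == D) g d = 0.
Proof. by move=> h; rewrite big_pred0 // => d; rewrite (negbTE (h d)). Qed.

Lemma sum_sqrt0 (F : finFieldType) (g : F -> algC) :
  \sum_(d | d ^+ 2 == 0) g d = g 0.
Proof.
by rewrite (eq_bigl (fun d => d == 0)) ?big_pred1_eq // => d; rewrite sqrf_eq0.
Qed.

Lemma sum_sqrt_sq (F : finFieldType) (hodd : odd #|F|) (g : F -> algC) (e : F) :
  e != 0 -> \sum_(d | d ^+ 2 == e ^+ 2) g d = g e + g (- e).
Proof.
move=> e0; rewrite (bigD1 e) ?eqxx //=; congr (_ + _).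
rewrite (eq_bigl (fun d => d == - e)) ?big_pred1_eq // => d; rewrite eqf_sqr.
have [-> | de] := eqVneq d e; last by rewrite /= andbT.
rewrite /=; apply/esym/negbTE; rewrite -addr_eq0 -mulr2n -mulr_natr mulf_eq0 (negbTE e0) /=.
by rewrite two_neq0.
Qed.

Lemma quad_reindex (F : finFieldType) (hodd : odd #|F|) (f : F -> algC) (a b c : F) :
  a != 0 ->
  \sum_(y | a * y ^+ 2 + b * y + c == 0) f y =
  \sum_(d | d ^+ 2 == b ^+ 2 - 4%:R * a * c) f ((d - b) / (2%:R * a)).
Proof.
move=> a0; have t0 := two_neq0 hodd; have f0 := four_neq0 hodd.
have ta0 : 2%:R * a != 0 by rewrite mulf_neq0.
rewrite (reindex (fun d => (d - b) / (2%:R * a))) /=.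
  apply: eq_bigl => d.
  have -> : a * ((d - b) / (2%:R * a)) ^+ 2 + b * ((d - b) / (2%:R * a)) + c
     = (d ^+ 2 - (b ^+ 2 - 4%:R * a * c)) / (4%:R * a) by field; rewrite f0 a0 t0.
  by rewrite mulf_eq0 invr_eq0 mulf_eq0 (negbTE f0) (negbTE a0) !orbF subr_eq0.
exists (fun y => 2%:R * a * y + b) => x _ /=.
  by rewrite mulrCA mulfV // mulr1 subrK.
by rewrite addrK mulrC mulKf.
Qed.

Lemma qchar_eq_sq (F : finFieldType) (hodd : odd #|F|) (x y s : F) :
  x * y = s ^+ 2 -> s != 0 -> qchar F x = qchar F y.
Proof.
move=> hxy s0.
have h1 : qchar F x * qchar F y = 1 by rewrite -qcharM // hxy qchar_sq.
have x0 : x != 0.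
  apply/negP => /eqP x0; move: hxy; rewrite x0 mul0r => /eqP.
  by rewrite eq_sym sqrf_eq0 (negbTE s0).
by rewrite -[qchar F y]mul1r -(qchar_sqr hodd x0) expr2 -mulrA h1 mulr1.
Qed.

Lemma qchar_opp_sum (F : finFieldType) (hodd : odd #|F|) (a b : F) :
  qchar F a * qchar F b = -1 -> qchar F a + qchar F b = 0.
Proof.
move=> h.
have a0 : a != 0.
  apply/negP => /eqP a0; move: h; rewrite a0 qchar0 mul0r => /eqP.
  by rewrite eq_sym oppr_eq0 oner_eq0.
rewrite -[qchar F b]mul1r -(qchar_sqr hodd a0) expr2 -mulrA h.
by rewrite mulrN1 subrr.
Qed.

Lemma qchar_nonsq_val (F : finFieldType) (D : F) :
  (forall d, d ^+ 2 != D) -> qchar F D = -1.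
Proof.
move=> h; rewrite /qchar.
have -> : (D == 0) = false.
  by apply/negbTE/negP => /eqP D0; have := h 0; rewrite D0 expr0n eqxx.
by case: existsP => // [[y hy]]; have := h y; rewrite hy.
Qed.

Lemma key_nz (F : finFieldType) (hodd : odd #|F|) (u v e m : F) :
  m ^+ 2 = u ^+ 2 - v ^+ 2 * e ^+ 2 -> m != 0 -> v != 0 -> e != 0 ->
  u + m + v * e != 0.
Proof.
move=> hm m0 v0 e0; apply/negP => /eqP h.
have hm' : m = - (u + v * e).
  have E : m = (u + m + v * e) - (u + v * e) by ring.
  by rewrite E h sub0r.
have : 2%:R * v * e * (u + v * e) = 0.
  have E : 2%:R * v * e * (u + v * e) =
     (- (u + v * e)) ^+ 2 - (u ^+ 2 - v ^+ 2 * e ^+ 2) by ring.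
  by rewrite E -hm' hm subrr.
move/eqP; rewrite !mulf_eq0 (negbTE (two_neq0 hodd)) (negbTE v0) (negbTE e0) /=.
move=> /eqP h2; move: m0; by rewrite hm' h2 oppr0 eqxx.
Qed.

Lemma key_L (F : finFieldType) (hodd : odd #|F|) (u v e m : F) :
  m ^+ 2 = u ^+ 2 - v ^+ 2 * e ^+ 2 -> m != 0 -> v != 0 -> e != 0 ->
  qchar F (u + v * e) = qchar F ((u + m) / 2%:R).
Proof.
move=> hm m0 v0 e0; have t0 := two_neq0 hodd.
apply: (qchar_eq_sq hodd (s := (u + m + v * e) / 2%:R)).
  apply/eqP; rewrite -subr_eq0; apply/eqP.
  have E : (u + v * e) * ((u + m) / 2%:R) - ((u + m + v * e) / 2%:R) ^+ 2
     = (u ^+ 2 - v ^+ 2 * e ^+ 2 - m ^+ 2) / 4%:R.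
    field; by rewrite four_neq0.
  by rewrite E hm subrr mul0r.
by rewrite mulf_neq0 ?invr_eq0 // key_nz.
Qed.

Lemma half_double (F : finFieldType) (hodd : odd #|F|) (u : F) :
  (u + u) / 2%:R = u.
Proof. have t0 := two_neq0 hodd; by field. Qed.

Lemma lemK (F : finFieldType) (hodd : odd #|F|) (u v D m : F) :
  v != 0 -> m != 0 -> u ^+ 2 - v ^+ 2 * D = m ^+ 2 ->
  \sum_(d | d ^+ 2 == D) qchar F (u + v * d) =
    qchar F ((u + m) / 2%:R) + qchar F ((u - m) / 2%:R).
Proof.
move=> v0 m0 hD; have t0 := two_neq0 hodd.
case: (boolP [exists e : F, e ^+ 2 == D]) => [/existsP[e /eqP he] | hne].
  subst D; have [e0 | e0] := eqVneq e 0.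
    subst e; rewrite expr0n /= sum_sqrt0 mulr0 addr0.
    move: hD; rewrite expr0n /= mulr0 subr0 => /eqP; rewrite eq_sym eqf_sqr.
    case/orP => /eqP ->.
      by rewrite subrr mul0r qchar0 addr0 half_double.
    by rewrite addrN mul0r qchar0 add0r opprK half_double.
  rewrite sum_sqrt_sq // (key_L hodd (m := m)) //.
  congr (_ + _); rewrite (key_L hodd (m := - m)) ?oppr_eq0 //.
  by rewrite sqrrN sqrrN hD.
have hn : forall d, d ^+ 2 != D.
  by move=> d; apply/negP => hd; move/existsP: hne; apply; exists d.
rewrite sum_sqrt_nonsq //; apply/esym/qchar_opp_sum => //.
rewrite -qcharM //.
have -> : (u + m) / 2%:R * ((u - m) / 2%:R) = (v / 2%:R) ^+ 2 * D.
  apply/eqP; rewrite -subr_eq0; apply/eqP.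
  have E : (u + m) / 2%:R * ((u - m) / 2%:R) - (v / 2%:R) ^+ 2 * D =
    (u ^+ 2 - v ^+ 2 * D - m ^+ 2) / 4%:R by field; rewrite four_neq0.
  by rewrite E hD subrr mul0r.
rewrite qcharM // qchar_sq ?mulf_neq0 ?invr_eq0 // mul1r.
exact: qchar_nonsq_val.
Qed.

Lemma lemM (F : finFieldType) (hodd : odd #|F|) (u v D : F) :
  qchar F (u ^+ 2 - v ^+ 2 * D) = -1 ->
  \sum_(d | d ^+ 2 == D) qchar F (u + v * d) = 0.
Proof.
move=> hD.
case: (boolP [exists e : F, e ^+ 2 == D]) => [/existsP[e /eqP he] | hne].
  subst D; have [e0 | e0] := eqVneq e 0.
    exfalso; move: hD; subst e; rewrite expr0n /= mulr0 subr0.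
    have [-> | u0] := eqVneq u 0.
      by rewrite expr0n qchar0 => /eqP; rewrite eq_sym oppr_eq0 oner_eq0.
    rewrite qchar_sq // => /eqP; rewrite -subr_eq0 opprK -(natrD _ 1 1).
    by rewrite pnatr_eq0.
  rewrite sum_sqrt_sq //; apply: qchar_opp_sum => //.
  rewrite -qcharM // -hD; congr (qchar F _); ring.
have hn : forall d, d ^+ 2 != D.
  by move=> d; apply/negP => hd; move/existsP: hne; apply; exists d.
by rewrite sum_sqrt_nonsq.
Qed.


Definition mob (F : finFieldType) (a y : F) : F :=
  if y == 1 then a else (1 - a * y) / (1 - y).
Definition mobinv (F : finFieldType) (a b : F) : F :=
  if b == a then 1 else (b - 1) / (b - a).

Lemma mobK (F : finFieldType) (a : F) : a != 1 -> cancel (mob a) (mobinv a).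
Proof.
move=> a1 y; rewrite /mob /mobinv.
have [-> | y1] := eqVneq y 1; first by rewrite eqxx.
have y1' : 1 - y != 0 by rewrite subr_eq0 eq_sym.
have a1' : 1 - a != 0 by rewrite subr_eq0 eq_sym.
have -> : ((1 - a * y) / (1 - y) == a) = false.
  apply/negbTE/negP => /eqP h.
  have : (1 - a) * (1 - y)^-1 = 0.
    have E : (1 - a) * (1 - y)^-1 = (1 - a * y) / (1 - y) - a by field.
    by rewrite E h subrr.
  by move/eqP; rewrite mulf_eq0 invr_eq0 (negbTE a1') (negbTE y1').
have D1 : (1 - a * y) / (1 - y) - a = (1 - a) / (1 - y) by field.
have D2 : (1 - a * y) / (1 - y) - 1 = y * (1 - a) / (1 - y) by field.
rewrite D1 D2; field; by rewrite a1' y1'.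
Qed.

Lemma T_val (F : finFieldType) (psi : F -> algC) (hpsi : is_mchar psi)
  (spsi : \sum_x psi x = 0) (a : F) : a != 1 ->
  \sum_(y | y != 0) psi ((1 - a * y) * (1 - y)^-1) = - 1 - psi a.
Proof.
move=> a1.
have h1 : \sum_y psi ((1 - a * y) * (1 - y)^-1) =
          \sum_y psi (mob a y) - psi a.
  rewrite [LHS](bigD1 1) // [X in _ = X - _](bigD1 1) //=.
  rewrite /mob eqxx subrr invr0 mulr0 (ch0 hpsi) add0r addrAC subrr add0r.
  by apply: eq_bigr => y /negbTE ->.
have h2 : \sum_y psi (mob a y) = 0.
  by rewrite -[RHS]spsi [RHS](reindex_inj (can_inj (mobK a1))).

rewrite h2 add0r in h1.
move: h1; rewrite (bigD1 0) //= mulr0 !subr0 invr1 mulr1 (ch1 hpsi) => h1.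
set S := \sum_(y | y != 0) _ in h1 *.
have -> : S = (1 + S) - 1 by rewrite addrAC subrr add0r.
by rewrite h1 addrC.
Qed.

Lemma sum_minus1 (F : finFieldType) (g : F -> algC) (b : F) :
  \sum_(a | a != b) g a = \sum_a g a - g b.
Proof. by rewrite [X in _ = X - _](bigD1 b) //= addrAC subrr add0r. Qed.

Lemma jac_nz (F : finFieldType) (chi psi : F -> algC)
  (hchi : is_mchar chi) (hpsi : is_mchar psi)
  (schi : \sum_x chi x = 0) (spsi : \sum_x psi x = 0)
  (sprod : \sum_x chi x * psi x = 0) :
  \sum_x chi x * psi (1 - x) != 0.
Proof.
set J := \sum_x _.
pose K := \sum_y chi (y^-1) * psi ((1 - y)^-1).
have inner : forall y : F, \sum_x chi x * psi (1 - x) * (chi (y^-1) * psi ((1 - y)^-1))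
   = if y != 0 then \sum_a chi a * psi ((1 - a * y) * (1 - y)^-1) else 0.
  move=> y; have [-> | y0] := eqVneq y 0.
    by apply: big1 => x _; rewrite invr0 (ch0 hchi) mul0r mulr0.
  rewrite (reindex_inj (mulIf y0)) /=.
  apply: eq_bigr => a _.
  by rewrite mulrACA -!(chM hchi) -!(chM hpsi) mulfK.
have JK : J * K = #|F|%:R.
  rewrite /K mulr_sumr.
  under eq_bigr do rewrite mulr_suml inner.
  rewrite -big_mkcond /= exchange_big /=.
  under eq_bigr do rewrite -mulr_sumr.
  rewrite (bigD1 1) //= (ch1 hchi) mul1r.
  rewrite [X in _ + X](eq_bigr (fun a => - chi a - chi a * psi a)); last first.
    by move=> a a1; rewrite (T_val hpsi spsi a1) mulrBr mulrN1.
  rewrite big_split /= sumrN sumrN !sum_minus1 schi sprod (ch1 hchi) (ch1 hpsi) mulr1.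
  have f1 : forall i : F, psi ((1 - 1 * i) / (1 - i)) = if i == 1 then 0 else 1.
    move=> i; rewrite mul1r; have [-> | i1] := eqVneq i 1.
      by rewrite subrr invr0 mulr0 (ch0 hpsi).
    by rewrite mulfV ?(ch1 hpsi) // subr_eq0 eq_sym.
  rewrite (eq_bigr (fun i => if i == 1 then 0 else 1)); last by move=> i _; exact: f1.
  rewrite f1 (eq_sym 0) oner_eq0 (bigD1 1) //= eqxx add0r.
  rewrite (eq_bigr (fun _ => 1)); last by move=> i /negbTE ->.
  rewrite sum_minus1 sumr_const.
  rewrite (@eq_card _ _ F) //.
  ring.
apply/negP => /eqP J0; move: JK; rewrite J0 mul0r => /eqP.
rewrite eq_sym pnatr_eq0; have := card_gt1 F; by case: #|F|.
Qed.


Lemma sqrt_count (F : finFieldType) (hodd : odd #|F|) (D : F) :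
  \sum_(d | d ^+ 2 == D) (1 : algC) = 1 + qchar F D.
Proof.
case: (boolP [exists e : F, e ^+ 2 == D]) => [/existsP[e /eqP he] | hne].
  subst D; have [-> | e0] := eqVneq e 0.
    by rewrite expr0n /= sum_sqrt0 qchar0 addr0.
  by rewrite sum_sqrt_sq // qchar_sq.
have hn : forall d, d ^+ 2 != D.
  by move=> d; apply/negP => hd; move/existsP: hne; apply; exists d.
by rewrite sum_sqrt_nonsq // qchar_nonsq_val // subrr.
Qed.

Lemma sqrtF_spec (F : finFieldType) (w : F) :
  [exists y : F, y ^+ 2 == w] -> sqrtF w ^+ 2 = w.
Proof.
rewrite /sqrtF; case: pickP => [s /eqP -> // | h /existsP [y hy]].
by have := h y; rewrite hy.
Qed.

Lemma sqrtF0 (F : finFieldType) : sqrtF (0 : F) = 0.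
Proof.
apply/eqP; rewrite -sqrf_eq0; apply/eqP; apply: sqrtF_spec.
by apply/existsP; exists 0; rewrite expr0n.
Qed.

Lemma qchar_sqM (F : finFieldType) (hodd : odd #|F|) (k y : F) :
  k != 0 -> qchar F (k ^+ 2 * y) = qchar F y.
Proof. by move=> k0; rewrite qcharM // qchar_sq // mul1r. Qed.

Lemma Rside1 (F : finFieldType) (hodd : odd #|F|) (A : F -> algC) (hA : is_mchar A)
  (sAphi : \sum_w A w * qchar F w = 0) (k : F) :
  (\sum_x qchar F x * A (x * (1 - x)^-1)) * A ((k ^+ 2)^-1) =
  \sum_w A w * (qchar F w * qchar F (1 + k ^+ 2 * w)).
Proof.
have [-> | k0] := eqVneq k 0.
  rewrite expr0n /= invr0 (ch0 hA) mulr0 -[LHS]sAphi.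
  by apply: eq_bigr => w _; rewrite mul0r addr0 qchar1 mulr1.
set c := k ^+ 2; have c0 : c != 0 by rewrite expf_neq0.
rewrite mulr_suml.
rewrite (eq_bigr (fun x => qchar F x * A (x * (1 - x)^-1 * c^-1))); last first.
  by move=> x _; rewrite -mulrA -(chM hA).
rewrite fiber_sum; apply: eq_bigr => w _.
have [-> | w0] := eqVneq w 0; first by rewrite (ch0 hA) !mul0r.
congr (_ * _).
have [hc | hc] := eqVneq (1 + c * w) 0.
  rewrite hc qchar0 mulr0 big_pred0 // => x; apply/negbTE/negP => /eqP hx.
  have x1 : 1 - x != 0.
    apply/negP => /eqP x1; move: hx; rewrite x1 invr0 mulr0 mul0r => /eqP.
    by rewrite eq_sym (negbTE w0).
  have : x * (1 + c * w) = c * w.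
    rewrite -hx; field; by rewrite c0 x1.
  by rewrite hc mulr0 => /eqP; rewrite eq_sym mulf_eq0 (negbTE c0) (negbTE w0).
rewrite (eq_bigl (fun x => x == c * w / (1 + c * w))); last first.
  move=> x; apply/eqP/eqP => [hx | ->].
    have x1 : 1 - x != 0.
      apply/negP => /eqP x1; move: hx; rewrite x1 invr0 mulr0 mul0r => /eqP.
      by rewrite eq_sym (negbTE w0).
    have : x * (1 + c * w) = c * w.
      rewrite -hx; field; by rewrite c0 x1.
    by move=> hh; apply: (mulIf hc); rewrite hh divfK.
  have -> : 1 - c * w / (1 + c * w) = (1 + c * w)^-1 by field.
  by rewrite invrK divfK // mulrC mulKf.
by rewrite (big_pred1 (c * w / (1 + c * w))) // qcharM // qchar_inv // qcharM // qchar_sq // mul1r.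
Qed.

Lemma Rside2 (F : finFieldType) (hodd : odd #|F|) (A : F -> algC) (hA : is_mchar A)
  (sAphi : \sum_w A w * qchar F w = 0) (k : F) : k != 0 ->
  (\sum_x qchar F (x * (1 - x)) * A (x * (1 - x))) * A ((k ^+ 2)^-1) =
  \sum_w A w * (qchar F w * qchar F (1 - 4%:R * k ^+ 2 * w)).
Proof.
move=> k0; set c := k ^+ 2; have c0 : c != 0 by rewrite expf_neq0.
rewrite mulr_suml.
rewrite (eq_bigr (fun x => qchar F (x * (1 - x)) * A (x * (1 - x) * c^-1))); last first.
  by move=> x _; rewrite -mulrA -(chM hA).
rewrite fiber_sum.
rewrite (eq_bigr (fun w => A w * (qchar F w) + A w * (qchar F w * qchar F (1 - 4%:R * c * w)))).
  by rewrite big_split /= sAphi add0r.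
move=> w _; have [-> | w0] := eqVneq w 0; first by rewrite (ch0 hA) !mul0r addr0.
rewrite -mulrDr; congr (_ * _).
rewrite (eq_bigr (fun _ => qchar F w * 1)); last first.
  move=> x /eqP hx; rewrite mulr1.
  have -> : x * (1 - x) = c * w by rewrite -hx; field.
  by rewrite qchar_sqM.
transitivity (qchar F w * (1 + qchar F (1 - 4%:R * c * w))); last by rewrite mulrDr mulr1.
rewrite -mulr_sumr; congr (_ * _).
rewrite (eq_bigl (fun x => 1 * x ^+ 2 + (-1) * x + c * w == 0)); last first.
  move=> x; apply/idP/idP => /eqP hx; apply/eqP.
    rewrite -hx; field; rewrite ?c0 //.
  have E : x * (1 - x) / c = w - (1 * x ^+ 2 + (-1) * x + c * w) / c.
    field; rewrite ?c0 //.
  by rewrite E hx mul0r subr0.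
rewrite (@quad_reindex _ hodd (fun _ => 1) 1 (-1) (c * w)) ?oner_eq0 // sqrt_count //.
by congr (1 + qchar F _); ring.
Qed.


Lemma N1_val (F : finFieldType) (hodd : odd #|F|) (z x : F) :
  z != 0 -> x != 0 ->
  \sum_(y | y * (1 - y)^-1 * (1 - z * y)^-1 == x) qchar F y =
  qchar F (2%:R * (x * z)) *
  \sum_(d | d ^+ 2 == (x * (1 + z) + 1) ^+ 2 - 4%:R * (x * z) * x)
     qchar F ((x * (1 + z) + 1) + 1 * d).
Proof.
move=> z0 x0; have t0 := two_neq0 hodd.
have xz0 : x * z != 0 by rewrite mulf_neq0.
rewrite (eq_bigl (fun y => (x * z) * y ^+ 2 + (- (x * (1 + z) + 1)) * y + x == 0)); last first.
  move=> y; apply/idP/idP => /eqP hy; apply/eqP.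
    have y1 : 1 - y != 0.
      apply/negP => /eqP y1; move: hy; rewrite y1 invr0 mulr0 mul0r => /eqP.
      by rewrite eq_sym (negbTE x0).
    have zy1 : 1 - z * y != 0.
      apply/negP => /eqP zy1; move: hy; rewrite zy1 invr0 mulr0 => /eqP.
      by rewrite eq_sym (negbTE x0).
    rewrite -hy; field; by rewrite y1 zy1.
  have hy' : y = x * (1 - y) * (1 - z * y).
    apply/eqP; rewrite -subr_eq0; apply/eqP; rewrite -[RHS]oppr0 -hy; ring.
  have y1 : 1 - y != 0.
    apply/negP => /eqP y1; move: hy'; rewrite y1 mulr0 mul0r => y0.
    by move: y1; rewrite y0 subr0 => /eqP; rewrite oner_eq0.
  have zy1 : 1 - z * y != 0.
    apply/negP => /eqP zy1; move: hy'; rewrite zy1 mulr0 => y0.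
    by move: zy1; rewrite y0 mulr0 subr0 => /eqP; rewrite oner_eq0.
  rewrite {1}hy'; field; by rewrite y1 zy1.
rewrite (@quad_reindex _ hodd (qchar F) (x * z) (- (x * (1 + z) + 1)) x) //.
rewrite mulr_sumr; apply: eq_big => [d | d _]; first by rewrite sqrrN.
rewrite [LHS]qcharM // qchar_inv // mulrC; congr (_ * qchar F _); ring.
Qed.

Lemma qchar_half (F : finFieldType) (hodd : odd #|F|) (x s w : F) :
  x != 0 -> s != 0 ->
  qchar F (2%:R * (x * s ^+ 2)) * qchar F (w / 2%:R) = qchar F x * qchar F w.
Proof.
move=> x0 s0; have t0 := two_neq0 hodd.
rewrite [qchar F (2%:R * _)]qcharM // [qchar F (x * _)]qcharM // qchar_sq // mulr1 [qchar F (w / _)]qcharM // qchar_inv //.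
have h2 : qchar F 2%:R * qchar F 2%:R = 1 by rewrite -expr2 qchar_sqr.
transitivity (qchar F 2%:R * qchar F 2%:R * (qchar F x * qchar F w)); first ring.
by rewrite h2 mul1r.
Qed.

Lemma N1_nonsq (F : finFieldType) (hodd : odd #|F|) (z x : F) :
  z != 0 -> x != 0 -> (forall s, s ^+ 2 != z) ->
  \sum_(y | y * (1 - y)^-1 * (1 - z * y)^-1 == x) qchar F y = 0.
Proof.
move=> z0 x0 hz; rewrite N1_val //; have t0 := two_neq0 hodd.
rewrite (lemM hodd (u := x * (1 + z) + 1) (v := 1)) ?mulr0 //.
have -> : (x * (1 + z) + 1) ^+ 2 - 1 ^+ 2 *
   ((x * (1 + z) + 1) ^+ 2 - 4%:R * (x * z) * x) = (2%:R * x) ^+ 2 * z by ring.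
by rewrite qchar_sqM ?mulf_neq0 // qchar_nonsq_val.
Qed.

Lemma N1_sq (F : finFieldType) (hodd : odd #|F|) (s x : F) :
  s != 0 -> x != 0 ->
  \sum_(y | y * (1 - y)^-1 * (1 - s ^+ 2 * y)^-1 == x) qchar F y =
  qchar F x * (qchar F (1 + (1 + s) ^+ 2 * x) + qchar F (1 + (1 - s) ^+ 2 * x)).
Proof.
move=> s0 x0; have t0 := two_neq0 hodd.
rewrite N1_val ?expf_neq0 //.
rewrite (lemK hodd (u := x * (1 + s ^+ 2) + 1) (v := 1) (m := 2%:R * x * s)) ?oner_eq0 ?mulf_neq0 //; last by ring.
rewrite mulrDr !qchar_half //.
by rewrite -mulrDr; congr (_ * (qchar F _ + qchar F _)); ring.
Qed.

Lemma N2_val (F : finFieldType) (hodd : odd #|F|) (z x : F) :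
  x != 0 ->
  \sum_(y | y * (1 - y) * (1 - z * y)^-1 == x) qchar F (y * (1 - y)) =
  qchar F x * (qchar F 2%:R *
  \sum_(d | d ^+ 2 == (1 + x * z) ^+ 2 - 4%:R * 1 * x)
     qchar F ((2%:R - z - x * z ^+ 2) + (- z) * d)).
Proof.
move=> x0; have t0 := two_neq0 hodd.
transitivity (qchar F x *
  \sum_(y | 1 * y ^+ 2 + (- (1 + x * z)) * y + x == 0) qchar F (1 - z * y)).
  rewrite mulr_sumr big_mkcond [RHS]big_mkcond; apply: eq_bigr => y _ /=.
  have EQ : 1 * y ^+ 2 + (- (1 + x * z)) * y + x = x * (1 - z * y) - y * (1 - y) by ring.
  case: (eqVneq (y * (1 - y) * (1 - z * y)^-1) x) => hy.
    have zy1 : 1 - z * y != 0.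
      apply/negP => /eqP zy1; move: hy; rewrite zy1 invr0 mulr0 => /eqP.
      by rewrite eq_sym (negbTE x0).
    have E : y * (1 - y) = x * (1 - z * y) by rewrite -hy; field.
    by rewrite EQ E subrr eqxx qcharM.
  case: ifP => // /eqP hq.
  have [zy1 | zy1] := eqVneq (1 - z * y) 0; first by rewrite zy1 qchar0 mulr0.
  exfalso; move/eqP: hy; apply.
  have E : y * (1 - y) = x * (1 - z * y).
    by apply/eqP; rewrite eq_sym -subr_eq0 -EQ hq.
  by rewrite E mulfK.
rewrite (@quad_reindex _ hodd (fun y => qchar F (1 - z * y)) 1 (- (1 + x * z)) x) ?oner_eq0 //.
congr (_ * _); rewrite mulr_sumr; apply: eq_big => [d | d _]; first by rewrite sqrrN.
have -> : 1 - z * ((d - - (1 + x * z)) / (2%:R * 1)) =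
  (2%:R - z - x * z ^+ 2 + - z * d) / 2%:R by field.
by rewrite qcharM // qchar_inv // mulrC.
Qed.

Lemma qchar_2half (F : finFieldType) (hodd : odd #|F|) (w : F) :
  qchar F 2%:R * qchar F (w / 2%:R) = qchar F w.
Proof.
have t0 := two_neq0 hodd.
by rewrite qcharM // qchar_inv // mulrCA -expr2 qchar_sqr // mulr1.
Qed.

Lemma N2_nonsq (F : finFieldType) (hodd : odd #|F|) (z x : F) :
  x != 0 -> (forall t, t ^+ 2 != 1 - z) ->
  \sum_(y | y * (1 - y) * (1 - z * y)^-1 == x) qchar F (y * (1 - y)) = 0.
Proof.
move=> x0 hz; rewrite N2_val //; have t0 := two_neq0 hodd.
rewrite (lemM hodd (u := 2%:R - z - x * z ^+ 2) (v := - z)) ?mulr0 //.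
have -> : (2%:R - z - x * z ^+ 2) ^+ 2 - (- z) ^+ 2 *
   ((1 + x * z) ^+ 2 - 4%:R * 1 * x) = 2%:R ^+ 2 * (1 - z) by ring.
by rewrite qchar_sqM // qchar_nonsq_val.
Qed.

Lemma N2_sq (F : finFieldType) (hodd : odd #|F|) (t x : F) :
  t != 0 -> 1 - t ^+ 2 != 0 -> x != 0 ->
  \sum_(y | y * (1 - y) * (1 - (1 - t ^+ 2) * y)^-1 == x) qchar F (y * (1 - y)) =
  qchar F x * (qchar F (1 - (1 - t) ^+ 2 * x) + qchar F (1 - (1 + t) ^+ 2 * x)).
Proof.
move=> t0 z0 x0; have t20 := two_neq0 hodd.
have fz : 1 - t ^+ 2 = (1 + t) * (1 - t) by ring.
have p0 : 1 + t != 0 by apply: contraNneq z0 => h; rewrite fz h mul0r.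
have m0 : 1 - t != 0 by apply: contraNneq z0 => h; rewrite fz h mulr0.
rewrite N2_val //.
rewrite (lemK hodd (u := 2%:R - (1 - t ^+ 2) - x * (1 - t ^+ 2) ^+ 2) (v := - (1 - t ^+ 2))
   (m := 2%:R * t)) ?oppr_eq0 ?mulf_neq0 //; last by ring.
rewrite mulrDr !qchar_2half //.
congr (_ * (_ + _)).
  rewrite -[RHS](qchar_sqM hodd _ p0); congr (qchar F _); ring.
rewrite -[RHS](qchar_sqM hodd _ m0); congr (qchar F _); ring.
Qed.

Lemma N2_one (F : finFieldType) (hodd : odd #|F|) (x : F) :
  x != 0 ->
  \sum_(y | y * (1 - y) * (1 - 1 * y)^-1 == x) qchar F (y * (1 - y)) =
  qchar F x * qchar F (1 - x).
Proof.
move=> x0; have t0 := two_neq0 hodd.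
rewrite N2_val //; congr (_ * _).
rewrite (eq_bigl (fun d => d ^+ 2 == (1 - x) ^+ 2)); last first.
  by move=> d; congr (_ == _); ring.
have [-> | x1] := eqVneq x 1.
  rewrite subrr expr0n /= sum_sqrt0.
  have -> : 2%:R - 1 - 1 * 1 ^+ 2 + - 1 * (0 : F) = 0 by ring.
  by rewrite !qchar0 mulr0.
rewrite sum_sqrt_sq ?subr_eq0 1?eq_sym //.
have -> : 2%:R - 1 - x * 1 ^+ 2 + - 1 * (1 - x) = 0 by ring.
have -> : 2%:R - 1 - x * 1 ^+ 2 + - 1 * - (1 - x) = 2%:R * (1 - x) by ring.
by rewrite qchar0 add0r qcharM // mulrA -expr2 qchar_sqr // mul1r.
Qed.


Lemma cexp_cconj (F : finFieldType) (A : F -> algC) (hA : is_mchar A) u :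
  cexp (cconj A) 2 u = A ((u ^+ 2)^-1).
Proof. by rewrite /cexp /cconj ch_conj // -chX // exprVn. Qed.

Lemma T1 (F : finFieldType) (hodd : odd #|F|) (A : F -> algC) (hA : is_mchar A) u :
  cmul (cconj (cmul A (qchar F))) (qchar F) u = A (u^-1).
Proof.
rewrite /cmul /cconj rmorphM /= ch_conj // qchar_conj -mulrA -expr2.
have [-> | u0] := eqVneq u 0; first by rewrite invr0 (ch0 hA) mul0r.
by rewrite qchar_sqr // mulr1.
Qed.

Lemma T1' (F : finFieldType) (hodd : odd #|F|) (A : F -> algC) (hA : is_mchar A) u :
  cmul (qchar F) (cconj (cmul A (qchar F))) u = A (u^-1).
Proof. by rewrite -(T1 hodd hA) /cmul mulrC. Qed.

Lemma T2 (F : finFieldType) (hodd : odd #|F|) (A : F -> algC) (hA : is_mchar A) u :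
  cmul (cconj (cmul A (qchar F))) (cexp A 2) u = A u * qchar F u.
Proof.
rewrite /cmul /cconj /cexp rmorphM /= ch_conj // qchar_conj.
have [-> | u0] := eqVneq u 0; first by rewrite qchar0 mulr0 mul0r mulr0.
have a0 := ch_neq0 hA u0.
by rewrite ch_inv // expr2; field.
Qed.

Lemma T2' (F : finFieldType) (hodd : odd #|F|) (A : F -> algC) (hA : is_mchar A) u :
  cmul (cexp A 2) (cconj (cmul A (qchar F))) u = A u * qchar F u.
Proof. by rewrite -(T2 hodd hA) /cmul mulrC. Qed.

Lemma nontriv1 (F : finFieldType) (A : F -> algC) (hA : is_mchar A) :
  cexp A 1 <> eps F -> exists a, a != 0 /\ A a != 1.
Proof.
move=> h; case: (boolP [exists a, (a != 0) && (A a != 1)]).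
  by case/existsP => a /andP[a0 aa]; exists a.
move=> hn; exfalso; apply: h; apply: functional_extensionality => x.
rewrite /cexp /eps expr1; have [-> | x0] := eqVneq x 0; first exact: ch0.
apply/eqP; apply: contraR hn => hx; apply/existsP; exists x; by rewrite x0.
Qed.

Lemma nontriv2 (F : finFieldType) (A : F -> algC) (hA : is_mchar A) :
  cexp A 2 <> eps F -> exists a, a != 0 /\ A a ^+ 2 != 1.
Proof.
move=> h; case: (boolP [exists a, (a != 0) && (A a ^+ 2 != 1)]).
  by case/existsP => a /andP[a0 aa]; exists a.
move=> hn; exfalso; apply: h; apply: functional_extensionality => x.
rewrite /cexp /eps; have [-> | x0] := eqVneq x 0; first by rewrite (ch0 hA) expr0n.
apply/eqP; apply: contraR hn => hx; apply/existsP; exists x; by rewrite x0.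
Qed.

Lemma mchar_Aphi (F : finFieldType) (hodd : odd #|F|) (A : F -> algC) (hA : is_mchar A) :
  is_mchar (fun x => A x * qchar F x).
Proof.
split; first by rewrite (ch0 hA) mul0r.
  by rewrite (ch1 hA) qchar1 mulr1.
by move=> x y; rewrite (chM hA) qcharM //; ring.
Qed.

Lemma mchar_Abar (F : finFieldType) (A : F -> algC) (hA : is_mchar A) :
  is_mchar (fun x => A (x^-1)).
Proof.
split; first by rewrite invr0 (ch0 hA).
  by rewrite invr1 (ch1 hA).
by move=> x y; rewrite invfM (chM hA).
Qed.

Lemma sum_Aphi (F : finFieldType) (hodd : odd #|F|) (A : F -> algC) (hA : is_mchar A) :
  cexp A 2 <> eps F -> \sum_w A w * qchar F w = 0.
Proof.
move=> h2; have [a [a0 aa]] := nontriv2 hA h2.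
apply: (@char_sum0 _ _ _ a) => //.
  by move=> x y; rewrite (chM hA) qcharM //; ring.
apply: contra aa => /eqP h; apply/eqP.
have := congr1 (fun v => v ^+ 2) h; rewrite /= exprMn qchar_sqr // mulr1 expr1n.
by [].
Qed.


Lemma sum_phi (F : finFieldType) (hodd : odd #|F|) : \sum_w qchar F w = 0.
Proof.
have [a ha] := qchar_nonsq hodd.
have a0 : a != 0 by apply/negP => /eqP a0; move: ha; rewrite a0 qchar0 => /eqP; rewrite eq_sym oppr_eq0 oner_eq0.
apply: (@char_sum0 _ _ _ a) => //; first exact: qcharM.
by rewrite ha -subr_eq0 -opprD oppr_eq0 -mulr2n pnatr_eq0.
Qed.

Lemma J1_eq (F : finFieldType) (hodd : odd #|F|) (A : F -> algC) (hA : is_mchar A) :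
  jacobi (cmul A (qchar F)) (cmul (qchar F) (cconj (cmul A (qchar F)))) =
  \sum_x qchar F x * A (x * (1 - x)^-1).
Proof.
apply: eq_bigr => x _; rewrite T1' // {1}/cmul (chM hA); ring.
Qed.

Lemma J1_nz (F : finFieldType) (hodd : odd #|F|) (A : F -> algC) (hA : is_mchar A)
  (hord : cexp A 1 <> eps F /\ cexp A 2 <> eps F) :
  jacobi (cmul A (qchar F)) (cmul (qchar F) (cconj (cmul A (qchar F)))) != 0.
Proof.
case: hord => h1 h2.
rewrite /jacobi (eq_bigr (fun x => (A x * qchar F x) * A ((1 - x)^-1))); last first.
  by move=> x _; rewrite T1'.
apply: (@jac_nz _ (fun x => A x * qchar F x) (fun x => A (x^-1))); first exact: mchar_Aphi.
- exact: mchar_Abar.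
- exact: sum_Aphi.
- have [a [a0 aa]] := nontriv1 hA h1.
  apply: (@char_sum0 _ _ _ (a^-1)); first by move=> x y; rewrite invfM (chM hA).
    by rewrite invr_eq0.
  by rewrite invrK.
- transitivity (\sum_x qchar F x); last exact: sum_phi hodd.
  apply: eq_bigr => x _.
  have [-> | x0] := eqVneq x 0; first by rewrite (ch0 hA) qchar0 !mul0r.
  by rewrite mulrAC ch_inv_mul // mul1r.
Qed.

Lemma J2_eq (F : finFieldType) (hodd : odd #|F|) (A : F -> algC) (hA : is_mchar A) :
  jacobi (cmul A (qchar F)) (cmul (cexp A 2) (cconj (cmul A (qchar F)))) =
  \sum_x qchar F (x * (1 - x)) * A (x * (1 - x)).
Proof.
apply: eq_bigr => x _; rewrite T2' // {1}/cmul (chM hA) qcharM //; ring.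
Qed.

Lemma J2_nz (F : finFieldType) (hodd : odd #|F|) (A : F -> algC) (hA : is_mchar A)
  (hord : cexp A 1 <> eps F /\ cexp A 2 <> eps F) :
  jacobi (cmul A (qchar F)) (cmul (cexp A 2) (cconj (cmul A (qchar F)))) != 0.
Proof.
case: hord => h1 h2.
rewrite /jacobi (eq_bigr (fun x => (A x * qchar F x) * (A (1 - x) * qchar F (1 - x)))); last first.
  by move=> x _; rewrite T2'.
apply: (@jac_nz _ (fun x => A x * qchar F x) (fun x => A x * qchar F x)); first exact: mchar_Aphi.
- exact: mchar_Aphi.
- exact: sum_Aphi.
- exact: sum_Aphi.
- have [a [a0 aa]] := nontriv2 hA h2.
  apply: (@char_sum0 _ _ _ a) => //.
    by move=> x y; rewrite (chM hA) qcharM //; ring.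
  apply: contra aa => /eqP h; apply/eqP; rewrite -h.
  by rewrite -expr2 exprMn qchar_sqr // mulr1.
Qed.

Lemma P1_eq (F : finFieldType) (hodd : odd #|F|) (A : F -> algC) (hA : is_mchar A) z :
  P21 A (cmul A (qchar F)) (qchar F) z =
  \sum_x A x * \sum_(y | y * (1 - y)^-1 * (1 - z * y)^-1 == x) qchar F y.
Proof.
rewrite /P21 -fiber_sum; apply: eq_bigr => y _.
rewrite T1 // /cconj ch_conj // /cmul !(chM hA); ring.
Qed.

Lemma P2_eq (F : finFieldType) (hodd : odd #|F|) (A : F -> algC) (hA : is_mchar A) z :
  P21 A (cmul A (qchar F)) (cexp A 2) z =
  \sum_x A x * \sum_(y | y * (1 - y) * (1 - z * y)^-1 == x) qchar F (y * (1 - y)).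
Proof.
rewrite /P21 -(fiber_sum (fun y => qchar F (y * (1 - y)))); apply: eq_bigr => y _.
rewrite T2 // /cconj ch_conj // /cmul !(chM hA) qcharM //; ring.
Qed.


Lemma ident1 (F : finFieldType) (hodd : odd #|F|) (z : F) (hz : z != 0)
  (A : F -> algC) (hA : is_mchar A)
  (hord : cexp A 1 <> eps F /\ cexp A 2 <> eps F) :
  F21 A (cmul A (qchar F)) (qchar F) z =
    (1 + qchar F z) / 2 *
      (cexp (cconj A) 2 (1 + sqrtF z) + cexp (cconj A) 2 (1 - sqrtF z)).
Proof.
have Jnz := J1_nz hodd hA hord.
have sAphi := sum_Aphi hodd hA (proj2 hord).
rewrite /F21 P1_eq //.
case: (boolP [exists s : F, s ^+ 2 == z]) => hsq; last first.
  have hn : forall s, s ^+ 2 != z.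
    by move=> s; apply/negP => hs; move/negP: hsq; apply; apply/existsP; exists s.
  rewrite qchar_nonsq_val // subrr !mul0r big1 ?mul0r // => x _.
  have [-> | x0] := eqVneq x 0; first by rewrite (ch0 hA) mul0r.
  by rewrite N1_nonsq // mulr0.
have hs := sqrtF_spec hsq; move: (sqrtF z) hs => s hs.
have s0 : s != 0 by apply: contraNneq hz => s0; rewrite -hs s0 expr0n.
subst z.
rewrite qchar_sq // (_ : (1 + 1) / 2 = 1 :> algC); last first.
  by rewrite -mulr2n divff // pnatr_eq0.
rewrite mul1r !cexp_cconj //.
rewrite (eq_bigr (fun x => A x * (qchar F x * qchar F (1 + (1 + s) ^+ 2 * x)) +
                         A x * (qchar F x * qchar F (1 + (1 - s) ^+ 2 * x)))); last first.
  move=> x _; have [-> | x0] := eqVneq x 0; first by rewrite (ch0 hA) !mul0r addr0.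
  by rewrite N1_sq // -mulrDr -mulrDr.
rewrite big_split /= -!(Rside1 hodd hA sAphi) -mulrDr J1_eq // mulrC mulKf //.
by rewrite -J1_eq.
Qed.

Lemma ident2 (F : finFieldType) (hodd : odd #|F|) (z : F) (hz : z != 0)
  (A : F -> algC) (hA : is_mchar A)
  (hord : cexp A 1 <> eps F /\ cexp A 2 <> eps F) :
  F21 A (cmul A (qchar F)) (cexp A 2) z =
    (1 + qchar F (1 - z)) / 2 *
      (cexp (cconj A) 2 ((1 + sqrtF (1 - z)) / 2%:R)
       + cexp (cconj A) 2 ((1 - sqrtF (1 - z)) / 2%:R)).
Proof.
have Jnz := J2_nz hodd hA hord.
have sAphi := sum_Aphi hodd hA (proj2 hord).
have t20 := two_neq0 hodd.
rewrite /F21 P2_eq //.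
case: (boolP [exists t : F, t ^+ 2 == 1 - z]) => hsq; last first.
  have hn : forall t, t ^+ 2 != 1 - z.
    by move=> t; apply/negP => hs; move/negP: hsq; apply; apply/existsP; exists t.
  rewrite qchar_nonsq_val // subrr !mul0r big1 ?mul0r // => x _.
  have [-> | x0] := eqVneq x 0; first by rewrite (ch0 hA) mul0r.
  by rewrite N2_nonsq // mulr0.
have hs := sqrtF_spec hsq; move: (sqrtF (1 - z)) hs => t ht.
have [t0 | t0] := eqVneq t 0.
  have z1 : z = 1.
    by apply/eqP; rewrite -subr_eq0 -oppr_eq0 opprB -ht t0 expr0n.
  subst z t; rewrite subrr qchar0 addr0 subr0 addr0 !cexp_cconj //.
  rewrite (eq_bigr (fun x => A x * (qchar F x * qchar F (1 - 4%:R * (1 / 2%:R) ^+ 2 * x)))); last first.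
    move=> x _; have [-> | x0] := eqVneq x 0; first by rewrite (ch0 hA) !mul0r.
    rewrite N2_one //; congr (_ * (_ * qchar F _)); field; exact: t20.
  rewrite -(Rside2 hodd hA sAphi) ?mulf_neq0 ?invr_eq0 ?oner_eq0 //.
  rewrite J2_eq // mulrC mulKf; last by rewrite -J2_eq.
  by field.
have ez : z = 1 - t ^+ 2 by rewrite ht; ring.
subst z.
rewrite (_ : 1 - (1 - t ^+ 2) = t ^+ 2); last by ring.
rewrite qchar_sq // (_ : (1 + 1) / 2 = 1 :> algC); last first.
  by rewrite -mulr2n divff // pnatr_eq0.
rewrite mul1r !cexp_cconj //.
rewrite (eq_bigr (fun x =>
   A x * (qchar F x * qchar F (1 - 4%:R * ((1 - t) / 2%:R) ^+ 2 * x)) +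
   A x * (qchar F x * qchar F (1 - 4%:R * ((1 + t) / 2%:R) ^+ 2 * x)))); last first.
  move=> x _; have [-> | x0] := eqVneq x 0; first by rewrite (ch0 hA) !mul0r addr0.
  rewrite N2_sq // -mulrDr -mulrDr.
  by congr (_ * (_ * (qchar F _ + qchar F _))); field.
have fz : 1 - t ^+ 2 = (1 + t) * (1 - t) by ring.
have p0 : 1 + t != 0 by apply: contraNneq hz => h; rewrite fz h mul0r.
have m0 : 1 - t != 0 by apply: contraNneq hz => h; rewrite fz h mulr0.
rewrite big_split /= -!(Rside2 hodd hA sAphi) ?mulf_neq0 ?invr_eq0 //.
rewrite -mulrDr J2_eq // mulrC mulKf; last by rewrite -J2_eq.
by rewrite addrC.
Qed.


Unset Implicit Arguments. Set Strict Implicit.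

Theorem mainTheorem5 (F : finFieldType) (hodd : odd #|F|) (z : F) (hz : z != 0)
  (A : F -> algC) (hA : is_mchar A)
  (hord : cexp A 1 <> eps F /\ cexp A 2 <> eps F) :
  F21 A (cmul A (qchar F)) (qchar F) z =
    (1 + qchar F z) / 2 *
      (cexp (cconj A) 2 (1 + sqrtF z) + cexp (cconj A) 2 (1 - sqrtF z))
  /\
  F21 A (cmul A (qchar F)) (cexp A 2) z =
    (1 + qchar F (1 - z)) / 2 *
      (cexp (cconj A) 2 ((1 + sqrtF (1 - z)) / 2%:R)
       + cexp (cconj A) 2 ((1 - sqrtF (1 - z)) / 2%:R)).
Proof.
split; [exact: ident1 | exact: ident2].
Qed.
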